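(* For every positive integer $k$, every $1<p\le 2$ and every $0<\eta\le 1$ there exists a positive integer $\mathrm{U}(k,p,\eta)$ such that the following holds. If $(\Omega,\mathcal{F},\mathbb{P})$ is a probability space, $\mathcal{S}$ is a $k$-semiring on $\Omega$ with $\mathcal{S}\subseteq\mathcal{F}$ and $f\in L_p(\Omega,\mathcal{F},\mathbb{P})$ with $\|f\|_{L_p}\le 1$, then there exist a positive integer $M\le\mathrm{U}(k,p,\eta)$ and a partition $\mathcal{P}$ of $\Omega$ with $\mathcal{P}\subseteq\mathcal{S}$ and $|\mathcal{P}|=M$ such that $\sum_{S\in\mathrm{Unf}(\mathcal{P},f,\eta)}\mathbb{P}(S)\ge 1-\eta$.
   Context: A collection $\mathcal{S}$ of subsets of a nonempty set $\Omega$ is a $k$-semiring if: $\emptyset,\Omega\in\mathcal{S}$; $S\cap T\in\mathcal{S}$ for $S,T\in\mathcal{S}$; for $S,T\in\mathcal{S}$ there exist $\ell\in\{1,\dots,k\}$ and pairwise disjoint $R_1,\dots,R_\ell\in\mathcal{S}$ with $S\setminus T=R_1\cup\dots\cup R_\ell$. For an event $S$ with $\mathbb{P}(S)>0$ let $\mathbb{E}(f\mid S)=(\int_S f\,d\mathbb{P})/\mathbb{P}(S)$, and $\mathbb{E}(f\mid S)=0$ if $\mathbb{P}(S)=0$. A set $S\in\mathcal{S}$ is $(f,\mathcal{S},\eta)$-uniform if for every $T\subseteq S$ with $T\in\mathcal{S}$ we have $|\int_T (f-\mathbb{E}(f\mid S))\,d\mathbb{P}|\le\eta\,\mathbb{P}(S)$.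 For $\mathcal{C}\subseteq\mathcal{S}$, $\mathrm{Unf}(\mathcal{C},f,\eta)$ is the set of $C\in\mathcal{C}$ that are $(f,\mathcal{S},\eta)$-uniform. $\mathcal{P}\subseteq\mathcal{S}$ means every member of the partition lies in $\mathcal{S}$. *)

(* Defs.v *)
From HB Require Import structures.
From mathcomp Require Import all_boot all_order all_algebra.
From mathcomp Require Import all_classical all_reals all_analysis.
Set Implicit Arguments. Unset Strict Implicit. Unset Printing Implicit Defensive.
Import Order.TTheory GRing.Theory Num.Theory.
Local Open Scope classical_set_scope.
Local Open Scope ring_scope.

Definition k_semiring (Omega : Type) (k : nat) (Sf : set (set Omega)) : Prop :=
  [/\ Sf set0, Sf setT,
      (forall S T, Sf S -> Sf T -> Sf (S `&` T)) &
      (forall S T, Sf S -> Sf T ->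
         exists l : nat, exists Rs : 'I_l -> set Omega,
           [/\ (1 <= l <= k)%N,
               (forall i, Sf (Rs i)),
               (forall i j, i != j -> Rs i `&` Rs j = set0) &
               S `\` T = \bigcup_(i in [set: 'I_l]) Rs i])].

Definition cond_exp d (Omega : measurableType d) (R : realType)
  (P : probability Omega R) (f : Omega -> R) (S : set Omega) : R :=
  if (0 < fine (P S)) then (\int[P]_(x in S) f x) / fine (P S) else 0.

Definition uniform_set d (Omega : measurableType d) (R : realType)
  (P : probability Omega R) (Sf : set (set Omega)) (f : Omega -> R)
  (eta : R) (S : set Omega) : Prop :=
  Sf S /\
  forall T, Sf T -> T `<=` S ->
    `| \int[P]_(x in T) (f x - cond_exp P f S) | <= eta * fine (P S).

Definition is_partition (Omega : Type) (M : nat) (Pt : 'I_M -> set Omega) : Prop :=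
  [/\ (forall i, Pt i !=set0),
      (forall i j, i != j -> Pt i `&` Pt j = set0) &
      \bigcup_(i in [set: 'I_M]) Pt i = setT].

(* Main.v *)
Require Import Defs.
From HB Require Import structures.
From mathcomp Require Import all_boot all_order all_algebra.
From mathcomp Require Import all_classical all_reals all_analysis.
From mathcomp Require Import ring lra measurable_realfun.
Import Order.TTheory GRing.Theory Num.Theory.
Local Open Scope classical_set_scope.
Local Open Scope ring_scope.
Import numFieldNormedType.Exports.
Section Alg.
Variable R : realType.
Definition Qf (a m : R) := if 0 < m then a ^+ 2 / m else 0.

Lemma Qf_ge0 a m : 0 <= Qf a m.
Proof. rewrite /Qf; case: ifP => // m0; apply: divr_ge0 => //; [exact: sqr_ge0 | exact: ltW]. Qed.

Lemma Qf_sub (a1 a2 m1 m2 : R) : 0 <= m1 -> 0 <= m2 -> (m1 = 0 -> a1 = 0) -> (m2 = 0 -> a2 = 0) ->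
  Qf (a1 + a2) (m1 + m2) <= Qf a1 m1 + Qf a2 m2.
Proof.
move=> h1 h2 e1 e2.
have [E1|m1p] := eqVneq m1 0.
  by rewrite E1 (e1 E1) !add0r {2}/Qf ltxx add0r.
have [E2|m2p] := eqVneq m2 0.
  by rewrite E2 (e2 E2) /Qf ltxx !addr0.
have m1g : 0 < m1 by rewrite lt_def m1p.
have m2g : 0 < m2 by rewrite lt_def m2p.
have mg : 0 < m1 + m2 by rewrite addr_gt0.
rewrite /Qf m1g m2g mg -subr_ge0.
have -> : a1 ^+ 2 / m1 + a2 ^+ 2 / m2 - (a1 + a2) ^+ 2 / (m1 + m2) =
   (a1 * m2 - a2 * m1) ^+ 2 / (m1 * m2 * (m1 + m2)).
  by field; rewrite !gt_eqF.
by apply: divr_ge0; [exact: sqr_ge0| rewrite !mulr_ge0 // ltW].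
Qed.

Lemma Qf_incr (aT aR mT mR delta : R) : 0 < delta -> 0 <= mT -> 0 <= mR ->
  (mT = 0 -> aT = 0) -> (mR = 0 -> aR = 0) ->
  delta * (mT + mR) < `| aT - (if 0 < mT + mR then (aT + aR) / (mT + mR) else 0) * mT | ->
  Qf (aT + aR) (mT + mR) + delta ^+ 2 * (mT + mR) <= Qf aT mT + Qf aR mR.
Proof.
move=> dp h1 h2 e1 e2 H.
have mTp : mT != 0.
  apply/eqP => E; move: H; rewrite E (e1 E) mulr0 subr0 normr0 ltNge => /negP; apply.
  by rewrite add0r mulr_ge0 // ltW.
have mTg : 0 < mT by rewrite lt_def mTp.
have mg : 0 < mT + mR by rewrite ltr_wpDr.
rewrite mg in H.
have mRp : mR != 0.
  apply/eqP => E; move: H; rewrite E (e2 E) !addr0 divfK ?gt_eqF // subrr normr0 ltNge => /negP; apply.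
  by rewrite mulr_ge0 // ltW.
have mRg : 0 < mR by rewrite lt_def mRp.
rewrite /Qf mTg mRg mg -subr_ge0.
set m := mT + mR in H *.
have Hx : aT - (aT + aR) / m * mT = (aT * mR - aR * mT) / m.
  by rewrite /m; field; rewrite gt_eqF.
have mi : 0 < m^-1 by rewrite invr_gt0.
rewrite Hx normrM (gtr0_norm mi) ltr_pdivlMr // in H.
set D := aT * mR - aR * mT in H *.
have -> : aT ^+ 2 / mT + aR ^+ 2 / mR - ((aT + aR) ^+ 2 / m + delta ^+ 2 * m) =
   (D ^+ 2 - delta ^+ 2 * m ^+ 2 * (mT * mR)) / (mT * mR * m).
  by rewrite /D /m; field; rewrite ?gt_eqF.
apply: divr_ge0; last by rewrite !mulr_ge0 // ltW.
rewrite subr_ge0.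
have H0 : 0 <= delta * m * m by rewrite !mulr_ge0 // ltW.
have H1 : (delta * m * m) ^+ 2 <= D ^+ 2.
  rewrite -(real_normK (num_real D)); nra.
have H2 : mT * mR <= m ^+ 2.
  rewrite /m; nra.
apply: le_trans H1.
have E : (delta * m * m) ^+ 2 = delta ^+ 2 * m ^+ 2 * m ^+ 2 by ring.
by rewrite E; apply: ler_wpM2l => //; rewrite mulr_ge0 // sqr_ge0.
Qed.
End Alg.
Arguments Qf {R}. Arguments Qf_sub {R}. Arguments Qf_incr {R}. Arguments Qf_ge0 {R}.

Section Lists.
Variable T : Type.
Fixpoint allp (P : set T -> Prop) (s : seq (set T)) : Prop :=
  match s with [::] => True | A :: s' => P A /\ allp P s' end.
Definition unionl (s : seq (set T)) := foldr setU set0 s.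
Fixpoint pwd (s : seq (set T)) : Prop :=
  match s with [::] => True | A :: s' => A `&` unionl s' = set0 /\ pwd s' end.
Definition nonemp (A : set T) : bool := `[< A !=set0 >].

Lemma allp_cat P s1 s2 : allp P (s1 ++ s2) <-> allp P s1 /\ allp P s2.
Proof. elim: s1 => [|A s1 IH] /=; first by split => // -[]. by rewrite IH; tauto. Qed.

Lemma allp_impl (P Q : set T -> Prop) s : (forall A, P A -> Q A) -> allp P s -> allp Q s.
Proof. by move=> PQ; elim: s => //= A s IH [/PQ ? /IH]. Qed.

Lemma unionl_cat s1 s2 : unionl (s1 ++ s2) = unionl s1 `|` unionl s2.
Proof. by elim: s1 => [|A s1 IH] /=; rewrite ?set0U // IH setUA. Qed.

Lemma disjP (A B : set T) : A `&` B = set0 <-> (forall x, A x -> B x -> False).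
Proof.
split => [h x Ax Bx|h]; first by have : (A `&` B) x by []; rewrite h.
by apply/seteqP; split => // x [/h].
Qed.

Lemma unionlP s x : unionl s x <-> exists2 B, List.In B s & B x.
Proof.
elim: s => [|A s IH] /=; first by split => // -[].
split.
  by case => [Ax|/IH [B ? ?]]; [exists A => //; left | exists B => //; right].
by case=> B [<- Bx|Bs Bx]; [left | right; apply/IH; exists B].
Qed.

Lemma pwd_cat s1 s2 : pwd s1 -> pwd s2 -> unionl s1 `&` unionl s2 = set0 -> pwd (s1 ++ s2).
Proof.
elim: s1 => [|A s1 IH] //= [h1 p1] p2 /disjP h3; split; last first.
  by apply: IH => //; apply/disjP => x U1 U2; apply: (h3 x) => //; right.
apply/disjP => x Ax; rewrite unionl_cat => -[U1|U2].
  by move/disjP: h1 => /(_ x Ax U1).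
by apply: (h3 x) => //; left.
Qed.

Lemma unionl_filter s : unionl (seq.filter nonemp s) = unionl s.
Proof.
elim: s => //= A s IH; rewrite /nonemp; case: (asboolP (A !=set0)) => /= [_|/nonemptyPn ->];
  by rewrite IH ?set0U.
Qed.

Lemma pwd_filter s : pwd s -> pwd (seq.filter nonemp s).
Proof.
elim: s => //= A s IH [h1 h2]; case: ifP => _; last exact: IH.
by split; [rewrite unionl_filter | apply: IH].
Qed.

Lemma allp_filter P s : allp P s -> allp P (seq.filter nonemp s).
Proof.
elim: s => //= A s IH [h1 h2]; case: ifP => _; last exact: IH.
by split; [| apply: IH].
Qed.

Lemma allp_filter_ne s : allp (fun B => B !=set0) (seq.filter nonemp s).
Proof. by elim: s => //= A s IH; case: ifP => // /asboolP. Qed.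

Lemma unionl_map (I : eqType) (F : I -> set T) (r : seq I) x :
  unionl (map F r) x <-> exists2 i, i \in r & F i x.
Proof.
elim: r => [|i r IH] /=; first by split => // -[].
split.
  case => [Fx|/IH [j ? ?]]; first by exists i => //; rewrite mem_head.
  by exists j => //; rewrite in_cons orbC; apply/orP; left.
case=> j; rewrite in_cons => /orP [/eqP ->|jr] Fx; first by left.
by right; apply/IH; exists j.
Qed.

Lemma pwd_map (I : eqType) (F : I -> set T) (r : seq I) :
  uniq r -> (forall i j, i != j -> F i `&` F j = set0) -> pwd (map F r).
Proof.
move=> + hF; elim: r => //= i r IH /andP [ir ur]; split; last exact: IH.
apply/disjP => x Fx /unionl_map [j jr Fjx].
have ij : i != j by apply: contraNneq ir => ->.
by move/disjP: (hF _ _ ij) => /(_ x Fx Fjx).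
Qed.

Lemma allp_map (I : Type) (P : set T -> Prop) (F : I -> set T) (r : seq I) :
  (forall i, P (F i)) -> allp P (map F r).
Proof. by move=> h; elim: r => //= i r ->; split. Qed.

End Lists.
Arguments allp {T}. Arguments unionl {T}. Arguments pwd {T}. Arguments nonemp {T}.
Arguments disjP {T}. Arguments allp_impl {T P Q s}. Arguments unionlP {T}. Arguments unionl_map {T I}.

Section Comb.
Variables (R : realType) (T : Type).
Variable meas : set (set T).
Hypothesis meas0 : meas set0.
Hypothesis measU : forall A B, meas A -> meas B -> meas (A `|` B).
Hypothesis measD : forall A B, meas A -> meas B -> meas (A `\` B).
Variable Sf : set (set T).
Hypothesis Sfm : Sf `<=` meas.
Variables (k : nat) (mu Ig : set T -> R) (L delta : R).
Hypothesis hk : k_semiring k Sf.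
Hypothesis muU : forall A B, meas A -> meas B -> A `&` B = set0 -> mu (A `|` B) = mu A + mu B.
Hypothesis IgU : forall A B, meas A -> meas B -> A `&` B = set0 -> Ig (A `|` B) = Ig A + Ig B.
Hypothesis mu_ge0 : forall A, meas A -> 0 <= mu A.
Hypothesis Ig_le : forall A, meas A -> `|Ig A| <= L * mu A.
Hypothesis muT : mu setT = 1.
Hypothesis dp : 0 < delta.

Lemma add0_gen (phi : set T -> R) :
  (forall A B, meas A -> meas B -> A `&` B = set0 -> phi (A `|` B) = phi A + phi B) ->
  phi set0 = 0.
Proof.
move=> h; have := h set0 set0 meas0 meas0 (setI0 _).
by rewrite setU0 => E; lra.
Qed.

Lemma add_unionl {phi : set T -> R} :
  (forall A B, meas A -> meas B -> A `&` B = set0 -> phi (A `|` B) = phi A + phi B) ->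
  forall s, allp meas s -> pwd s -> phi (unionl s) = \sum_(A <- s) phi A.
Proof.
move=> h; elim => [|A s IH] /= ; first by rewrite big_nil (add0_gen _ h).
move=> [mA ms] [d ps]; rewrite big_cons h //; first by rewrite IH.
by elim: s {IH d ps} ms => //= B s IH [mB ms]; apply: measU => //; apply: IH.
Qed.

Lemma meas_unionl {s} : allp meas s -> meas (unionl s).
Proof. by elim: s => //= B s IH [mB ms]; apply: measU => //; apply: IH. Qed.

Lemma mu_mono {A B} : meas A -> meas B -> A `<=` B -> mu A <= mu B.
Proof.
move=> mA mB AB; have mBA : meas (B `\` A) by exact: measD.
rewrite -(setDUK AB) muU //; first by rewrite lerDl mu_ge0.
by apply/disjP => x Ax [].
Qed.

Lemma Ig_zero {A} : meas A -> mu A = 0 -> Ig A = 0.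
Proof. by move=> mA h; apply/eqP; rewrite -normr_le0 -(mulr0 L) -h Ig_le. Qed.

Definition Q A := Qf (Ig A) (mu A).
Definition energy s := \sum_(A <- s) Q A.
Definition cexp A := if 0 < mu A then Ig A / mu A else 0.
Definition good A := forall B, Sf B -> B `<=` A -> `|Ig B - cexp A * mu B| <= delta * mu A.
Definition bad s := \sum_(A <- s) (if `[< good A >] then 0 else mu A).

Lemma Q_unionl s : allp meas s -> pwd s -> Q (unionl s) <= energy s.
Proof.
elim: s => [|A s IH] /=; first by rewrite /energy big_nil /Q /Qf (add0_gen _ muU) ltxx.
move=> [mA ms] [d ps]; rewrite /energy big_cons /Q.
have mU := meas_unionl ms.
rewrite muU // IgU //.
apply: (le_trans (Qf_sub _ _ _ _ (mu_ge0 _ mA) (mu_ge0 _ mU) (Ig_zero mA) (Ig_zero mU))).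
by apply: lerD => //; apply: IH.
Qed.

Lemma Q_le {A} : meas A -> Q A <= L ^+ 2 * mu A.
Proof.
move=> mA; rewrite /Q /Qf; case: ifP => [m0|_]; last by rewrite mulr_ge0 ?sqr_ge0 ?mu_ge0.
have h := Ig_le _ mA.
have h2 : Ig A ^+ 2 <= (L * mu A) ^+ 2.
  have h0 : 0 <= `|Ig A| by [].
  rewrite -(real_normK (num_real (Ig A))); nra.
by rewrite ler_pdivrMr // (_ : L ^+ 2 * mu A * mu A = (L * mu A) ^+ 2) //; ring.
Qed.

Lemma energy_le s : allp meas s -> pwd s -> energy s <= L ^+ 2 * mu (unionl s).
Proof.
move=> ms ps; rewrite (add_unionl muU _ ms ps) mulr_sumr /energy.
elim: s ms {ps} => [|A s IH] /=; first by rewrite !big_nil.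
by move=> [mA ms]; rewrite !big_cons; apply: lerD; [exact: Q_le | exact: IH].
Qed.

Lemma mu0 : mu set0 = 0. Proof. exact: (add0_gen _ muU). Qed.
Lemma Ig0 : Ig set0 = 0. Proof. exact: (add0_gen _ IgU). Qed.

Lemma energy_filter s : energy (seq.filter nonemp s) = energy s.
Proof.
rewrite /energy big_filter big_mkcond /=; apply: eq_bigr => A _.
case: ifP => // /asboolP /nonemptyPn ->.
by rewrite /Q mu0 Ig0 /Qf ltxx.
Qed.

Lemma pieces A : Sf A -> A !=set0 ->
  exists p, [/\ allp Sf p, allp (fun B => B !=set0) p, pwd p, unionl p = A &
   (size p <= k.+1)%N /\ Q A + (if `[< good A >] then 0 else delta ^+ 2 * mu A) <= energy p].
Proof.
move=> SA nA; have mA := Sfm _ SA.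
case: (asboolP (good A)) => [gA|nG].
  exists [:: A]; split => //=; first by rewrite setI0.
    by rewrite setU0.
  by split => //; rewrite /energy big_seq1 addr0.
move: nG => /existsNP [B /not_implyP [SB /not_implyP [BA /negP]]]; rewrite -ltNge => HB.
case: hk => _ _ _ hD; have [l [Rs [hl SR dR UR]]] := hD A B SA SB.
have mB := Sfm _ SB.
have mAB : meas (A `\` B) by exact: measD.
have nB : B !=set0.
  apply: contrapT => /nonemptyPn B0; move: HB; rewrite B0 mu0 Ig0 mulr0 subr0 normr0.
  by move=> h; have := mulr_ge0 (ltW dp) (mu_ge0 _ mA); lra.
set rs := map Rs (enum 'I_l).
have prs : pwd rs by apply: pwd_map => //; exact: enum_uniq.
have Srs : allp Sf rs by exact: allp_map.
have mrs : allp meas rs by exact: allp_impl Srs.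
have Urs : unionl rs = A `\` B.
  rewrite UR; apply/seteqP; split => x.
    by move=> /unionl_map [i _ h]; exists i.
  by move=> [i _ h]; apply/unionl_map; exists i => //; rewrite mem_enum.
have dBA : B `&` (A `\` B) = set0 by apply/disjP => x Bx [].
exists (B :: seq.filter nonemp rs); split => /=.
- by split => //; exact: allp_filter.
- by split => //; exact: allp_filter_ne.
- by rewrite unionl_filter Urs; split => //; exact: pwd_filter.
- by rewrite unionl_filter Urs setDUK.
split.
  rewrite ltnS size_filter (leq_trans (count_size _ _)) //.
  by rewrite /rs size_map size_enum_ord; case/andP: hl.
rewrite /energy big_cons -/(energy _) energy_filter.
apply: (le_trans _ (lerD (lexx (Q B)) (Q_unionl _ mrs prs))); rewrite Urs.
have emu : mu A = mu B + mu (A `\` B) by rewrite -muU // setDUK.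
have eIg : Ig A = Ig B + Ig (A `\` B) by rewrite -IgU // setDUK.
rewrite /cexp emu eIg in HB.
rewrite /Q emu eIg.
apply: Qf_incr => //; [exact: mu_ge0 | exact: mu_ge0 | exact: Ig_zero | exact: Ig_zero].
Qed.

Lemma refine s : allp Sf s -> allp (fun B => B !=set0) s -> pwd s ->
  exists s', [/\ allp Sf s', allp (fun B => B !=set0) s', pwd s', unionl s' = unionl s &
   (size s' <= k.+1 * size s)%N /\ energy s + delta ^+ 2 * bad s <= energy s'].
Proof.
elim: s => [|A s IH] /=.
  by move=> _ _ _; exists [::]; split => //; split => //; rewrite /energy /bad !big_nil mulr0 addr0.
move=> [SA Ss] [nA ns] [dA ps].
have [p [Sp np pp Up [sp ep]]] := pieces _ SA nA.
have [s2 [Ss2 ns2 ps2 Us2 [ss2 es2]]] := IH Ss ns ps.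
exists (p ++ s2); split.
- by apply/allp_cat.
- by apply/allp_cat.
- by apply: pwd_cat => //; rewrite Up Us2.
- by rewrite unionl_cat Up Us2.
split.
  by rewrite size_cat mulnS (leq_add sp ss2).
rewrite /energy /bad big_cat !big_cons /= -/(energy _) -/(energy s2) -/(bad s) -/(energy s).
apply: le_trans (lerD ep es2); case: asboolP => _; rewrite ?add0r ?mulrDr; lra.
Qed.

Lemma bad_ge0 s : allp meas s -> 0 <= bad s.
Proof.
elim: s => [|A s IH] /=; first by rewrite /bad big_nil.
by move=> [mA ms]; rewrite /bad big_cons -/(bad s); case: ifP => _; rewrite ?add0r ?IH // addr_ge0 // ?mu_ge0 // IH.
Qed.

Lemma energy_ge0 s : 0 <= energy s.
Proof. by rewrite /energy sumr_ge0 // => A _; exact: Qf_ge0. Qed.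

Lemma iterate n : [set: T] !=set0 -> exists s, [/\ allp Sf s, allp (fun B => B !=set0) s, pwd s, unionl s = setT &
   (size s <= k.+1 ^ n)%N /\ (bad s <= delta \/ n%:R * delta ^+ 3 <= energy s)].
Proof.
move=> nT; elim: n => [|n [s [Ss ns ps Us [ss hs]]]].
  exists [:: setT]; split => //=; first by case: hk.
  - by rewrite setI0.
  - by rewrite setU0.
  by split => //; right; rewrite mul0r energy_ge0.
have [bs|bs] := leP (bad s) delta.
  exists s; split => //; split; last by left.
  by rewrite (leq_trans ss) // expnS leq_pmull.
have [s' [Ss' ns' ps' Us' [ss' es']]] := refine _ Ss ns ps.
exists s'; split => //; first by rewrite Us'.
split; first by rewrite expnS (leq_trans ss') // leq_mul2l ss orbT.
right; case: hs => [|hs]; first by rewrite leNgt bs.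
apply: le_trans es'; rewrite -nat1r mulrDl mul1r addrC.
apply: lerD => //.
rewrite exprSr; apply: ler_wpM2l; [exact: sqr_ge0 | exact: ltW].
Qed.

Lemma comb_main N : [set: T] !=set0 -> L ^+ 2 < N%:R * delta ^+ 3 ->
  exists s, [/\ allp Sf s, allp (fun B => B !=set0) s, pwd s, unionl s = setT &
   (size s <= k.+1 ^ N)%N /\ bad s <= delta].
Proof.
move=> nT hN; have [s [Ss ns ps Us [ss hs]]] := iterate N nT.
exists s; split => //; split => //; case: hs => // hs.
have := energy_le _ (allp_impl Sfm Ss) ps; rewrite Us muT mulr1 => h.
lra.
Qed.
End Comb.

Section Meas.
Variables (d : measure_display) (Omega : measurableType d) (R : realType) (P : probability Omega R).

Lemma muP_add (A B : set Omega) : measurable A -> measurable B -> A `&` B = set0 ->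
  fine (P (A `|` B)) = fine (P A) + fine (P B).
Proof.
move=> mA mB AB; rewrite measureU //; apply: fineD; exact: fin_num_measure.
Qed.

Lemma muP_ge0 (A : set Omega) : 0 <= fine (P A).
Proof. by apply: fine_ge0. Qed.

Lemma muP_T : fine (P setT) = 1.
Proof. by rewrite probability_setT. Qed.

Lemma intS (g : Omega -> R) (A : set Omega) : measurable A ->
  P.-integrable setT (EFin \o g) -> P.-integrable A (EFin \o g).
Proof. by move=> mA ig; apply: integrableS ig. Qed.

Lemma Rint_add (g : Omega -> R) (A B : set Omega) : P.-integrable setT (EFin \o g) ->
  measurable A -> measurable B -> A `&` B = set0 ->
  \int[P]_(x in A `|` B) g x = \int[P]_(x in A) g x + \int[P]_(x in B) g x.
Proof.
move=> ig mA mB AB; apply: Rintegral_setU => //.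
  by apply: intS => //; exact: measurableU.
by apply/eqP.
Qed.

Lemma int_abs (g : Omega -> R) (A : set Omega) : measurable A ->
  P.-integrable A (EFin \o g) -> P.-integrable A (EFin \o (fun x => `|g x|)).
Proof.
move=> mA ig; have := integrable_abse ig.
by apply: eq_integrable => // x _.
Qed.

Lemma Rint_bound (g : Omega -> R) (L : R) (A : set Omega) : measurable A ->
  P.-integrable A (EFin \o g) -> (forall x, `|g x| <= L) ->
  `| \int[P]_(x in A) g x | <= L * fine (P A).
Proof.
move=> mA ig gL; apply: (le_trans (le_normr_Rintegral _ _)) => //.
rewrite -Rintegral_cst //; apply: le_Rintegral => //.
  exact: int_abs.
exact: finite_measure_integrable_cst.
Qed.

Lemma Rint_cstB (g : Omega -> R) (c : R) (A : set Omega) : measurable A ->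
  P.-integrable A (EFin \o g) ->
  \int[P]_(x in A) (g x - c) = \int[P]_(x in A) g x - c * fine (P A).
Proof.
move=> mA ig; rewrite RintegralB //; first by rewrite Rintegral_cst.
exact: finite_measure_integrable_cst.
Qed.

Lemma Rint_D (g h : Omega -> R) (A : set Omega) : measurable A ->
  P.-integrable A (EFin \o g) -> P.-integrable A (EFin \o h) ->
  \int[P]_(x in A) (g x + h x) = \int[P]_(x in A) g x + \int[P]_(x in A) h x.
Proof. by move=> mA ig ih; rewrite RintegralD. Qed.

End Meas.

Lemma clamp_pt (R : realType) (L x : R) : 0 <= L ->
  `|x - Order.max (- L) (Order.min L x)| <= `|x| /\ (`|x| <= L -> x - Order.max (- L) (Order.min L x) = 0).
Proof.
move=> L0; have [xL|xL] := lerP x L.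
  have [xL'|xL'] := lerP (- L) x.
    by rewrite subrr normr0; split.
  have -> : `|x| = - x by rewrite ltr0_norm //; lra.
  split; last by lra.
  rewrite ler0_norm; lra.
have [xL'|xL'] := lerP (- L) L; last by lra.
have -> : `|x| = x by rewrite gtr0_norm //; lra.
split; last by lra.
rewrite ger0_norm; lra.
Qed.

Lemma trunc_pt (R : realType) (L K p x : R) : 1 < p -> 0 < L -> L `^ (p - 1) = K ->
  `|x - Order.max (- L) (Order.min L x)| * K <= `|x| `^ p.
Proof.
move=> p1 L0 LK; have [h1 h2] := @clamp_pt R L x (ltW L0).
have [xL|xL] := lerP `|x| L.
  by rewrite h2 // normr0 mul0r powR_ge0.
have K0 : 0 <= K by rewrite -LK powR_ge0.
rewrite -mulr_powRB1 //; last by lra.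
apply: (le_trans (ler_wpM2r K0 h1)); apply: ler_wpM2l => //.
rewrite -LK; apply: ge0_ler_powR; rewrite ?nnegrE //; [lra | exact: ltW | exact: ltW].
Qed.

Lemma clamp_bound (R : realType) (L x : R) : 0 <= L -> `|Order.max (- L) (Order.min L x)| <= L.
Proof.
move=> L0; have [xL|xL] := lerP x L.
  have [xL'|xL'] := lerP (- L) x; last by rewrite normrN ger0_norm.
  by rewrite real_ler_norml ?num_real //; lra.
have [xL'|xL'] := lerP (- L) L; last by lra.
by rewrite ger0_norm.
Qed.

Section Fin.
Variables (d : measure_display) (Omega : measurableType d) (R : realType) (P : probability Omega R).
Variables (f : Omega -> R) (p L K : R).
Hypotheses (p1 : 1 < p) (L0 : 0 < L) (LK : L `^ (p - 1) = K).
Hypothesis mf : measurable_fun setT f.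
Hypothesis hN : ('N[P]_(p%:E)[EFin \o f] <= 1)%E.

Definition gt : Omega -> R := cst (- L) \max (cst L \min f).
Definition ht : Omega -> R := f \- gt.
Definition Fp (x : Omega) : R := `|f x| `^ p.

Lemma K_gt0 : 0 < K.
Proof. by rewrite -LK powR_gt0. Qed.

Lemma mFp : measurable_fun setT Fp.
Proof.
apply: (measurableT_comp (measurable_realfun.measurable_powR p)).
exact: (measurableT_comp (@measurable_realfun.normr_measurable R _)).
Qed.

Lemma intFp_le : (\int[P]_x (Fp x)%:E <= 1)%E.
Proof.
have p0 : p != 0 by rewrite gt_eqF // (lt_trans ltr01 p1).
have -> : (\int[P]_x (Fp x)%:E = 'N[P]_(p%:E)[EFin \o f] `^ p)%E.
  by rewrite poweR_Lnorm //; apply: eq_integral => x _; rewrite /Fp /= poweR_EFin.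
have p0' : 0 <= p by exact: ltW (lt_trans ltr01 p1).
rewrite -(poweR1r p); apply: (gt0_ler_poweR p0') => //.
- by rewrite in_itv /= Lnorm_ge0 leey.
- by rewrite in_itv /= lee01 leey.
Qed.

Lemma Fp_ge0 x : 0 <= Fp x.
Proof. exact: powR_ge0. Qed.

Lemma intFp : P.-integrable setT (EFin \o Fp).
Proof.
apply/integrableP; split; first exact/measurable_EFinP/mFp.
rewrite (_ : (\int[P]_x `|(EFin \o Fp) x| = \int[P]_x (Fp x)%:E)%E); last by apply: eq_integral => x _; rewrite /= ger0_norm ?Fp_ge0.
exact: le_lt_trans intFp_le (ltry 1).
Qed.


Lemma mgt : measurable_fun setT gt.
Proof.
apply: measurable_maxr; first exact: measurable_cst.
apply: measurable_minr => //; exact: measurable_cst.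
Qed.

Lemma mht : measurable_fun setT ht.
Proof. exact: measurable_funB mf mgt. Qed.

Lemma gt_bound x : `|gt x| <= L.
Proof. exact: clamp_bound (ltW L0). Qed.

Lemma int_gt : P.-integrable setT (EFin \o gt).
Proof.
apply: (le_integrable _ _ _ (finite_measure_integrable_cst P L measurableT)) => //.
  exact/measurable_EFinP/mgt.
move=> x _; change (`|gt x|%:E <= `|L|%:E)%E.
by rewrite lee_fin (ger0_norm (ltW L0)) gt_bound.
Qed.

Lemma ht_bound x : `|ht x| <= K^-1 * Fp x.
Proof.
rewrite mulrC ler_pdivlMr ?K_gt0 //; exact: trunc_pt.
Qed.

Lemma int_ht : P.-integrable setT (EFin \o ht).
Proof.
have h := integrableZl measurableT K^-1 intFp.
apply: (le_integrable _ _ _ h) => //; first exact/measurable_EFinP/mht.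
move=> x _; change (`|ht x|%:E <= `|K^-1 * Fp x|%:E)%E.
rewrite lee_fin (ger0_norm (mulr_ge0 _ (Fp_ge0 x))) ?ht_bound //.
by rewrite invr_ge0 ltW // K_gt0.
Qed.

Lemma int_f : P.-integrable setT (EFin \o f).
Proof.
have h := integrableD measurableT int_gt int_ht.
apply: eq_integrable h => // x _ /=.
by rewrite /ht /= -EFinD addrC subrK.
Qed.

Lemma H_T : \int[P]_x `|ht x| <= K^-1.
Proof.
apply: (@le_trans _ _ (\int[P]_x (K^-1 * Fp x))).
  apply: le_Rintegral => //; [exact: int_abs int_ht | | by move=> x _; exact: ht_bound].
  have := integrableZl measurableT K^-1 intFp.
  by apply: eq_integrable => // x _.
rewrite RintegralZl //; last exact: intFp.
rewrite -[leRHS]mulr1; apply: ler_wpM2l; first by rewrite invr_ge0 ltW // K_gt0.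
rewrite /Rintegral; have h0 := intFp_le.
have h1 : (0 <= \int[P]_x (Fp x)%:E)%E by apply: integral_ge0 => x _; rewrite lee_fin Fp_ge0.
move: h0 h1; case: (\int[P]_x (Fp x)%:E)%E => //= r.

Qed.


Definition muP (A : set Omega) := fine (P A).
Definition IgP (A : set Omega) := \int[P]_(x in A) gt x.
Definition HP (A : set Omega) := \int[P]_(x in A) `|ht x|.

Lemma norm3 (u v w : R) : `|u + v - w| <= `|u| + `|v| + `|w|.
Proof.
apply: (le_trans (ler_normB _ _)); rewrite lerD2r; exact: ler_normD.
Qed.

Lemma transfer (Sf : set (set Omega)) (eta : R) (A : set Omega) :
  Sf `<=` measurable -> Sf A -> 0 < eta ->
  good R Omega Sf muP IgP (eta / 2) A ->
  HP A <= eta / 4 * muP A ->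
  uniform_set P Sf f eta A.
Proof.
move=> Sfm SA ep gA HA; split => // B SB BA.
have mA := Sfm _ SA; have mB := Sfm _ SB.
have mAB : measurable (A `\` B) by exact: measurableD.
rewrite Rint_cstB //; last exact: intS int_f.
have eI X : measurable X -> \int[P]_(x in X) f x = IgP X + \int[P]_(x in X) ht x.
  move=> mX; rewrite /IgP -Rint_D //; last 2 first.
  - exact: intS int_gt.
  - exact: intS int_ht.
  by apply: eq_Rintegral => x _; rewrite /ht /= addrC subrK.
have dBA : B `&` (A `\` B) = set0 by apply/disjP => x Bx [].
have HBA : HP B <= HP A.
  rewrite /HP -(setDUK BA) Rint_add //; last exact: int_abs int_ht.
  by rewrite lerDl Rintegral_ge0.
have hB : `|\int[P]_(x in B) ht x| <= HP B.
  by rewrite /HP; apply: le_normr_Rintegral => //; exact: intS int_ht.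
have hA : `|\int[P]_(x in A) ht x| <= HP A.
  by rewrite /HP; apply: le_normr_Rintegral => //; exact: intS int_ht.
have bA : muP B <= muP A.
  rewrite /muP -(setDUK BA) muP_add //; rewrite lerDl; exact: muP_ge0.
have b0 : 0 <= muP B by exact: muP_ge0.
have gB := gA B SB BA; rewrite /cexp in gB.
rewrite /cond_exp (eI A mA) (eI B mB) -/(muP A) -/(muP B).
set IhA := \int[P]_(x in A) ht x in hA *.
set IhB := \int[P]_(x in B) ht x in hB *.
case: ifP gB => a0 gB.
  have hw : `|IhA / muP A * muP B| <= HP A.
    have ai : 0 < (muP A)^-1 by rewrite invr_gt0.
    rewrite normrM normrM (ger0_norm b0) (gtr0_norm ai) -mulrA.
    apply: (le_trans _ hA); rewrite -[leRHS]mulr1; apply: ler_wpM2l => //.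
    by rewrite mulrC ler_pdivrMr // mul1r.
  have E : IgP B + IhB - (IgP A + IhA) / muP A * muP B =
           (IgP B - IgP A / muP A * muP B) + IhB - IhA / muP A * muP B.
    by rewrite mulrDl mulrDl; ring.
  rewrite E; apply: (le_trans (norm3 _ _ _)).
  have := normr_ge0 IhB; lra.
rewrite mul0r subr0 in gB; rewrite mul0r subr0.
apply: (le_trans (ler_normD _ _)).
have a00 : muP A = 0.
  by apply/eqP; rewrite eq_le muP_ge0 andbT leNgt a0.
rewrite a00 !mulr0 in gB HA *.
have := normr_ge0 IhB; lra.
Qed.
End Fin.
Arguments muP {d Omega R}. Arguments IgP {d Omega R}. Arguments HP {d Omega R}. Arguments gt {d Omega R}. Arguments ht {d Omega R}.

Section ListNth.
Variable T : Type.

Lemma nth_allp (Q : set T -> Prop) (s : seq (set T)) i : allp Q s -> (i < size s)%N -> Q (nth set0 s i).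
Proof. by elim: s i => [|A s IH] [|i] //= [QA Qs] hi; [| apply: IH]. Qed.

Lemma nth_sub (s : seq (set T)) i : nth set0 s i `<=` unionl s.
Proof.
elim: s i => [|A s IH] i x /=; first by rewrite nth_nil.
case: i => [|i] /= h; [by left | by right; exact: (IH i)].
Qed.

Lemma pwd_nth (s : seq (set T)) i j : pwd s -> i != j -> nth set0 s i `&` nth set0 s j = set0.
Proof.
elim: s i j => [|A s IH] i j /=; first by rewrite !nth_nil setI0.
move=> [dA ps]; case: i => [|i]; case: j => [|j] //= ij.
- by apply/disjP => x Ax /(nth_sub s j x) Ux; move/disjP: dA => /(_ x Ax Ux).
- by apply/disjP => x /(nth_sub s i x) Ux Ax; move/disjP: dA => /(_ x Ax Ux).
- exact: IH.
Qed.

Lemma unionl_nth (s : seq (set T)) x : unionl s x -> exists i, (i < size s)%N /\ nth set0 s i x.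
Proof.
elim: s => [|A s IH] //= [Ax|/IH [i [hi hx]]]; first by exists 0%N.
by exists i.+1.
Qed.

Lemma sum_le_allp (R : realType) (Q : set T -> Prop) (s : seq (set T)) (F G : set T -> R) :
  allp Q s -> (forall A, Q A -> F A <= G A) -> \sum_(A <- s) F A <= \sum_(A <- s) G A.
Proof.
move=> + h; elim: s => [|A s IH] /=; first by rewrite !big_nil.
by move=> [QA Qs]; rewrite !big_cons; apply: lerD; [exact: h | exact: IH].
Qed.
End ListNth.

Lemma sum_fin (d : measure_display) (Omega : measurableType d) (R : realType)
  (P : probability Omega R) (Pr : set Omega -> bool) (s : seq (set Omega)) :
  allp measurable s ->
  (\sum_(A <- s | Pr A) P A = (\sum_(A <- s | Pr A) fine (P A))%:E)%E.
Proof.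
move=> ms; rewrite -sumEFin.
elim: s ms => [|A s IH] /=; first by rewrite !big_nil.
move=> [mA ms]; rewrite !big_cons IH //; case: ifP => // _.
by rewrite fineK // fin_num_measure.
Qed.

Theorem proposition4p2 (R : realType) :
  forall (k : nat) (p eta : R),
    (0 < k)%N -> 1 < p <= 2 -> 0 < eta <= 1 ->
    exists U : nat, (0 < U)%N /\
      forall (d : measure_display) (Omega : measurableType d)
             (P : probability Omega R) (Sf : set (set Omega)) (f : Omega -> R),
        k_semiring k Sf -> Sf `<=` measurable ->
        measurable_fun setT f ->
        ('N[P]_(p%:E)[EFin \o f] <= 1)%E ->
        exists M : nat, exists Pt : 'I_M -> set Omega,
          [/\ (0 < M <= U)%N,
              is_partition Pt,
              (forall i, Sf (Pt i)) &
              ((1 - eta)%:E <=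
                 \sum_(i < M | `[< uniform_set P Sf f eta (Pt i) >]) P (Pt i))%E].
Proof.
move=> k p eta k0 /andP[p1 p2] /andP[e0 e1].
pose K : R := 8 / eta ^+ 2.
have K0 : 0 < K by rewrite divr_gt0 // exprn_gt0.
pose L : R := K `^ (p - 1)^-1.
have L0 : 0 < L by rewrite powR_gt0.
have LK : L `^ (p - 1) = K.
  rewrite /L -powRrM mulVf ?powRr1 ?(ltW K0) //.
  by rewrite subr_eq0 gt_eqF.
pose delta : R := eta / 2.
have dp : 0 < delta by rewrite divr_gt0.
pose N := (Num.Def.trunc (L ^+ 2 / delta ^+ 3)).+1.
have hN : L ^+ 2 < N%:R * delta ^+ 3.
  by have := truncnS_gt (L ^+ 2 / delta ^+ 3); rewrite ltr_pdivrMr ?exprn_gt0.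
exists (k.+1 ^ N)%N; split; first by rewrite expn_gt0.
move=> dd Omega P Sf f hk Sfm mf hNf.
have muT : muP P setT = 1 by exact: muP_T.
have nT : [set: Omega] !=set0.
  apply: contrapT => /nonemptyPn T0; move: muT; rewrite /muP T0 measure0 /=.
  by move/eqP; rewrite eq_sym oner_eq0.
have muU : forall A B, measurable A -> measurable B -> A `&` B = set0 ->
    muP P (A `|` B) = muP P A + muP P B.
  by move=> A B mA mB AB; exact: muP_add.
have igt := @int_gt _ _ _ P f L L0 mf.
have IgU : forall A B, measurable A -> measurable B -> A `&` B = set0 ->
    IgP P f L (A `|` B) = IgP P f L A + IgP P f L B.
  by move=> A B mA mB AB; exact: Rint_add.
have mu_ge0 : forall A, measurable A -> 0 <= muP P A by move=> A _; exact: muP_ge0.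
have Ig_le : forall A, measurable A -> `|IgP P f L A| <= L * muP P A.
  move=> A mA; apply: Rint_bound => //; first exact: intS.
  by move=> x; exact: gt_bound.
have [s [Ss ns ps Us [ss bs]]] := @comb_main R Omega measurable measurable0
  (fun A B => @measurableU _ _ A B) (fun A B => @measurableD _ _ A B) Sf Sfm k
  (muP P) (IgP P f L) L delta hk muU IgU mu_ge0 Ig_le muT dp N nT hN.
have ms : allp measurable s := allp_impl Sfm Ss.
exists (size s), (fun i : 'I_(size s) => nth set0 s i); split.
- apply/andP; split => //.
  case: s {Ss ns ps ss bs ms} Us => //= E.
  by move: nT; rewrite -E => -[x].
- split.
  + by move=> i; exact: nth_allp ns (ltn_ord i).
  + by move=> i j ij; apply: pwd_nth.
  + apply/seteqP; split => x // _.
    have : unionl s x by rewrite Us.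
    by move/(@unionl_nth Omega) => [i [hi hx]]; exists (Ordinal hi).
- by move=> i; exact: nth_allp Ss (ltn_ord i).
rewrite (_ : (\sum_(i < size s | `[< uniform_set P Sf f eta (nth set0 s i) >]) P (nth set0 s i))%E
   = (\sum_(A <- s | `[< uniform_set P Sf f eta A >]) P A)%E); last first.
  by rewrite (big_nth set0) big_mkord.
rewrite sum_fin // lee_fin.
have mU : forall A B : set Omega, measurable A -> measurable B -> measurable (A `|` B).
  by move=> A B; exact: measurableU.
have tot : \sum_(A <- s) muP P A = 1.
  by rewrite -(@add_unionl R Omega measurable measurable0 mU _ muU s ms ps) Us.
have iht := @int_ht _ _ _ P f p L K p1 L0 LK mf hNf.
have HU : forall A B, measurable A -> measurable B -> A `&` B = set0 ->
    HP P f L (A `|` B) = HP P f L A + HP P f L B.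
  by move=> A B mA mB AB; apply: Rint_add => //; exact: int_abs.
have HT : \sum_(A <- s) HP P f L A <= K^-1.
  rewrite -(@add_unionl R Omega measurable measurable0 mU _ HU s ms ps) Us.
  exact: (@H_T _ _ _ P f p L K p1 L0 LK mf hNf).
have key : \sum_(A <- s | ~~ `[< uniform_set P Sf f eta A >]) muP P A <=
    bad R Omega Sf (muP P) (IgP P f L) delta s + 4 / eta * \sum_(A <- s) HP P f L A.
  rewrite big_mkcond /= mulr_sumr /bad -big_split /=.
  apply: (@sum_le_allp Omega R Sf s _ _ Ss) => A SA.
  have HA0 : 0 <= HP P f L A by apply: Rintegral_ge0 => x _.
  have m0 : 0 <= muP P A by exact: muP_ge0.
  have c0 : 0 <= 4 / eta * HP P f L A by rewrite mulr_ge0 // divr_ge0 // ltW.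
  case: asboolP => uA /=.
    by case: ifP => _; rewrite ?add0r // addr_ge0.
  case: asboolP => gA.
    have : ~ (HP P f L A <= eta / 4 * muP P A).
      move=> h; apply: uA; apply: (@transfer _ _ _ P f p L K) => //.
    move/negP; rewrite -ltNge => h; rewrite add0r.
    have -> : muP P A = 4 / eta * (eta / 4 * muP P A) by field; rewrite gt_eqF.
    by apply: ltW; rewrite ltr_pM2l // divr_gt0.
  by rewrite lerDl.
have c4 : 4 / eta * \sum_(A <- s) HP P f L A <= eta / 2.
  have -> : eta / 2 = 4 / eta * K^-1 by rewrite /K; field; rewrite gt_eqF.
  by rewrite ler_pM2l // divr_gt0.
have E := tot; rewrite (bigID (fun A => `[< uniform_set P Sf f eta A >])) /= in E.
rewrite /delta in bs.
have : \sum_(A <- s | `[< uniform_set P Sf f eta A >]) muP P A = \sum_(A <- s | `[< uniform_set P Sf f eta A >]) fine (P A) by [].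
lra.
Qed.
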